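(* Let $A,B$ be non-trivial finitely generated left-orderable groups. Then $G=A*B$ is Hucha with respect to the family consisting of $A$, $B$ and all cyclic subgroups of $G$.
   Context: A positive cone is a subsemigroup $P$ with $G=P\sqcup P^{-1}\sqcup\{1\}$. For a finite generating set $X$ with word metric $d_X$, an $r$-path is a sequence $g_0,\dots,g_n$ with $d_X(g_i,g_{i+1})\le r$; $S$ $r$-disconnects $H_1,H_2$ if every $r$-path from $H_1$ to $H_2$ meets $S$, and $r$-disconnects $P$ if it $r$-disconnects $\{u\},\{v\}$ for some $u,v\in P$. A negative swamp of width $r$ for a subgroup $H$ is $S\subseteq P^{-1}$ that $r$-disconnects $P$ and $r$-disconnects $g_1H,g_2H$ for some $g_1,g_2\in G$. A finitely generated left-orderable group $G$ is Hucha with respect to a family $\mathcal{H}$ of subgroups if for some (equivalently any) finite generating set, for every positive cone $P$, every $H\in\mathcal{H}$ and every $r>0$ there is a negative swamp of width $r$ for $H$. *)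

(* Defs.v *)
From Stdlib Require Import List.
Import ListNotations.

Set Implicit Arguments.
Unset Strict Implicit.

Record group := Group {
  carrier :> Type;
  mul : carrier -> carrier -> carrier;
  inv : carrier -> carrier;
  one : carrier;
  mulA : forall x y z, mul x (mul y z) = mul (mul x y) z;
  mul1g : forall x, mul one x = x;
  mulg1 : forall x, mul x one = x;
  mulVg : forall x, mul (inv x) x = one;
  mulgV : forall x, mul x (inv x) = one
}.

Arguments mul {g}.
Arguments inv {g}.
Arguments one {g}.

Definition is_hom (G H : group) (f : G -> H) : Prop :=
  forall x y : G, f (mul x y) = mul (f x) (f y).

Fixpoint prodw (G : group) (w : list G) : G :=
  match w with
  | nil => one
  | x :: w' => mul x (@prodw G w')
  end.

Definition letter (G : group) (X : list G) (a : G) : Prop :=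
  In a X \/ exists x, In x X /\ a = inv x.

Definition generates (G : group) (X : list G) : Prop :=
  forall g : G, exists w : list G, Forall (letter X) w /\ prodw w = g.

Definition finitely_generated (G : group) : Prop :=
  exists X : list G, generates X.

Definition nontrivial (G : group) : Prop := exists a : G, a <> one.

Definition positive_cone (G : group) (P : G -> Prop) : Prop :=
  (forall x y, P x -> P y -> P (mul x y)) /\
  (forall g : G,
     (P g /\ ~ P (inv g) /\ g <> one) \/
     (~ P g /\ P (inv g) /\ g <> one) \/
     (~ P g /\ ~ P (inv g) /\ g = one)).

Definition left_orderable (G : group) : Prop :=
  exists P : G -> Prop, positive_cone P.

(** word metric: d_X(g,h) <= r  iff  g^{-1} h is a product of at most r
    letters from X ∪ X^{-1} *)
Definition dist_le (G : group) (X : list G) (r : nat) (g h : G) : Prop :=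
  exists w : list G, Forall (letter X) w /\ length w <= r /\ mul g (prodw w) = h.

Fixpoint chain (T : Type) (R : T -> T -> Prop) (x : T) (l : list T) : Prop :=
  match l with
  | nil => True
  | y :: l' => R x y /\ @chain T R y l'
  end.

Definition r_disconnects (G : group) (X : list G) (r : nat)
  (S H1 H2 : G -> Prop) : Prop :=
  forall (x : G) (l : list G),
    H1 x -> H2 (last l x) -> chain (dist_le X r) x l ->
    S x \/ Exists S l.

Definition r_disconnects_cone (G : group) (X : list G) (r : nat)
  (S P : G -> Prop) : Prop :=
  exists u v : G, P u /\ P v /\
    r_disconnects X r S (fun g => g = u) (fun g => g = v).

Definition lcoset (G : group) (g : G) (H : G -> Prop) : G -> Prop :=
  fun x => exists h, H h /\ x = mul g h.

Definition negative_swamp (G : group) (X : list G) (P : G -> Prop)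
  (H : G -> Prop) (r : nat) (S : G -> Prop) : Prop :=
  (forall s, S s -> P (inv s)) /\
  r_disconnects_cone X r S P /\
  exists g1 g2 : G, r_disconnects X r S (lcoset g1 H) (lcoset g2 H).

Definition Hucha (G : group) (Fam : (G -> Prop) -> Prop) : Prop :=
  forall X : list G, generates X ->
  forall P : G -> Prop, positive_cone P ->
  forall H : G -> Prop, Fam H ->
  forall r : nat, 0 < r ->
  exists S : G -> Prop, negative_swamp X P H r S.

Definition is_free_product (A B G : group) (iA : A -> G) (iB : B -> G) : Prop :=
  is_hom iA /\ is_hom iB /\
  forall (K : group) (f : A -> K) (g : B -> K), is_hom f -> is_hom g ->
    (exists h : G -> K, is_hom h /\ (forall a, h (iA a) = f a) /\
                        (forall b, h (iB b) = g b)) /\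
    (forall h1 h2 : G -> K, is_hom h1 -> is_hom h2 ->
       (forall a, h1 (iA a) = f a) -> (forall b, h1 (iB b) = g b) ->
       (forall a, h2 (iA a) = f a) -> (forall b, h2 (iB b) = g b) ->
       forall x, h1 x = h2 x).

Fixpoint expn (G : group) (g : G) (n : nat) : G :=
  match n with O => one | S n' => mul g (@expn G g n') end.

Definition cyclic_subgroup (G : group) (g : G) : G -> Prop :=
  fun x => exists n : nat, x = expn g n \/ x = inv (expn g n).

Definition image (T : Type) (G : group) (f : T -> G) : G -> Prop :=
  fun x => exists t, x = f t.

Definition same_set (G : group) (H K : G -> Prop) : Prop := forall x, H x <-> K x.

Definition free_prod_family (A B G : group) (iA : A -> G) (iB : B -> G)
  (H : G -> Prop) : Prop :=
  same_set H (image iA) \/ same_set H (image iB) \/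
  exists g : G, same_set H (cyclic_subgroup g).

(* Main.v *)
Require Import Defs.
From Stdlib Require Import List ClassicalEpsilon ProofIrrelevance FunctionalExtensionality Lia Arith.
Import ListNotations.

Section Grp.
Context {Gr : group}.
Lemma mulKV (x y : Gr) : mul (inv x) (mul x y) = y.
Proof. rewrite mulA, mulVg, mul1g; reflexivity. Qed.
Lemma mulVK (x y : Gr) : mul x (mul (inv x) y) = y.
Proof. rewrite mulA, mulgV, mul1g; reflexivity. Qed.
Lemma mul_cancel_l (x y z : Gr) : mul x y = mul x z -> y = z.
Proof. intro H. rewrite <- (mulKV x y), H, mulKV; reflexivity. Qed.
Lemma mul_cancel_r (x y z : Gr) : mul y x = mul z x -> y = z.
Proof. intro H. rewrite <- (mulg1 y), <- (mulgV x), mulA, H, <- mulA, mulgV, mulg1; reflexivity. Qed.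
Lemma inv_inv (x : Gr) : inv (inv x) = x.
Proof. apply (mul_cancel_l (inv x)). rewrite mulgV, mulVg; reflexivity. Qed.
Lemma inv_mul (x y : Gr) : inv (mul x y) = mul (inv y) (inv x).
Proof. apply (mul_cancel_l (mul x y)). rewrite mulgV, <- mulA, (mulA y), mulgV, mul1g, mulgV; reflexivity. Qed.
Lemma inv_one : inv (@one Gr) = one.
Proof. rewrite <- (mul1g (inv one)), mulgV; reflexivity. Qed.
Lemma inv_uniq (x y : Gr) : mul x y = one -> y = inv x.
Proof. intro H. apply (mul_cancel_l x). rewrite H, mulgV; reflexivity. Qed.
Lemma mul_eq_one (x y : Gr) : mul x y = one -> x = inv y.
Proof. intro H. apply (mul_cancel_r y). rewrite H, mulVg; reflexivity. Qed.
Lemma inv_eq_one (x : Gr) : inv x = one -> x = one.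
Proof. intro H. rewrite <- (inv_inv x), H, inv_one; reflexivity. Qed.
End Grp.

Lemma hom_one (G1 G2 : group) (f : G1 -> G2) : is_hom f -> f one = one.
Proof.
  intro h. apply (mul_cancel_l (f one)). rewrite <- h, !mulg1; reflexivity.
Qed.
Lemma hom_inv (G1 G2 : group) (f : G1 -> G2) (x : G1) : is_hom f -> f (inv x) = inv (f x).
Proof.
  intro h. apply inv_uniq. rewrite <- h, mulgV. apply hom_one; auto.
Qed.

Arguments hom_one {G1 G2} f _.
Arguments hom_inv {G1 G2} f x _.

Section Cone.
Context {Gr : group} {P : Gr -> Prop} (cone : positive_cone P).
Lemma cone_mul x y : P x -> P y -> P (mul x y).
Proof. apply (proj1 cone). Qed.
Lemma cone_one : ~ P one.
Proof. destruct (proj2 cone one) as [(_&_&H)|[(H&_)|(H&_)]]; tauto. Qed.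
Lemma cone_both x : P x -> P (inv x) -> False.
Proof. destruct (proj2 cone x) as [(_&H&_)|[(H&_)|(H&_)]]; tauto. Qed.
Lemma cone_cases x : x <> one -> P x \/ P (inv x).
Proof. destruct (proj2 cone x) as [(H&_)|[(_&H&_)|(_&_&H)]]; tauto. Qed.
End Cone.

Lemma expn_S_r {Gr : group} (x : Gr) n : expn x (S n) = mul (expn x n) x.
Proof.
  induction n; simpl in *. - rewrite mulg1, mul1g; reflexivity.
  - rewrite IHn at 1. rewrite mulA; reflexivity.
Qed.
Lemma expn_conj {Gr : group} (x e : Gr) n :
  expn (mul x (mul e (inv x))) n = mul x (mul (expn e n) (inv x)).
Proof.
  induction n; simpl. - rewrite mul1g, mulgV; reflexivity.
  - rewrite IHn. rewrite !mulA. f_equal. rewrite <- !mulA. f_equal. f_equal.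
    rewrite mulA, mulVg, mul1g. reflexivity.
Qed.
Lemma expn_hom {G1 G2 : group} (f : G1 -> G2) (a : G1) n : is_hom f -> f (expn a n) = expn (f a) n.
Proof. intro hf. induction n; simpl. - apply hom_one; auto. - rewrite hf, IHn; reflexivity. Qed.
Lemma expn_inv {Gr : group} (x : Gr) n : expn (inv x) n = inv (expn x n).
Proof.
  induction n. - simpl. rewrite inv_one; reflexivity.
  - rewrite expn_S_r. simpl. rewrite inv_mul, IHn. reflexivity.
Qed.
Lemma expn_one {Gr : group} n : expn (@one Gr) n = one.
Proof. induction n; simpl; [reflexivity| rewrite IHn, mulg1; reflexivity]. Qed.

Definition dec (P : Prop) : {P} + {~ P} := excluded_middle_informative P.

Section FP.
Context (A B G : group) (iA : A -> G) (iB : B -> G) (homA : is_hom iA) (homB : is_hom iB).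
Context (univ : forall (K : group) (f : A -> K) (g : B -> K), is_hom f -> is_hom g ->
    (exists h : G -> K, is_hom h /\ (forall a, h (iA a) = f a) /\
                        (forall b, h (iB b) = g b)) /\
    (forall h1 h2 : G -> K, is_hom h1 -> is_hom h2 ->
       (forall a, h1 (iA a) = f a) -> (forall b, h1 (iB b) = g b) ->
       (forall a, h2 (iA a) = f a) -> (forall b, h2 (iB b) = g b) ->
       forall x, h1 x = h2 x)).

Definition Syl : Type := (A + B)%type.
Definition nontriv (s : Syl) : Prop := match s with inl a => a <> one | inr b => b <> one end.
Definition sameF (s t : Syl) : Prop :=
  match s, t with inl _, inl _ => True | inr _, inr _ => True | _, _ => False end.
Definition hd_ok (s : Syl) (w : list Syl) : Prop :=
  match w with [] => True | t :: _ => ~ sameF s t end.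
Fixpoint red (w : list Syl) : Prop :=
  match w with [] => True | s :: w' => nontriv s /\ hd_ok s w' /\ red w' end.

Definition actA (a : A) (w : list Syl) : list Syl :=
  match w with
  | inl a' :: w' => if dec (mul a a' = one) then w' else inl (mul a a') :: w'
  | _ => if dec (a = one) then w else inl a :: w
  end.
Definition actB (b : B) (w : list Syl) : list Syl :=
  match w with
  | inr b' :: w' => if dec (mul b b' = one) then w' else inr (mul b b') :: w'
  | _ => if dec (b = one) then w else inr b :: w
  end.

Lemma hd_okA (x y : A) w : hd_ok (inl x) w -> hd_ok (inl y) w.
Proof. destruct w as [|[]]; simpl; auto. Qed.
Lemma hd_okB (x y : B) w : hd_ok (inr x) w -> hd_ok (inr y) w.
Proof. destruct w as [|[]]; simpl; auto. Qed.

Lemma red_actA a w : red w -> red (actA a w).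
Proof.
  destruct w as [|[a'|b'] w']; simpl; intros.
  - destruct dec; simpl; auto.
  - destruct H as (H1&H2&H3). destruct dec; auto. simpl. split; [auto|split; auto].
    all: try (eapply hd_okA; eauto).
  - destruct dec; simpl; auto.
Qed.
Lemma red_actB b w : red w -> red (actB b w).
Proof.
  destruct w as [|[a'|b'] w']; simpl; intros.
  - destruct dec; simpl; auto.
  - destruct dec; simpl; auto.
  - destruct H as (H1&H2&H3). destruct dec; auto. simpl. split; [auto|split; auto].
    all: try (eapply hd_okB; eauto).
Qed.

Lemma actA_one w : red w -> actA one w = w.
Proof.
  destruct w as [|[a'|b'] w']; simpl; intros.
  - destruct dec; auto; contradiction.
  - rewrite mul1g. destruct dec; [tauto|auto].
  - destruct dec; auto; contradiction.
Qed.
Lemma actB_one w : red w -> actB one w = w.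
Proof.
  destruct w as [|[a'|b'] w']; simpl; intros.
  - destruct dec; auto; contradiction.
  - destruct dec; auto; contradiction.
  - rewrite mul1g. destruct dec; [tauto|auto].
Qed.

Lemma actA_comp a a' w : red w -> actA a (actA a' w) = actA (mul a a') w.
Proof.
  destruct w as [|[x|y] w']; simpl; intros.
  - destruct (dec (a' = one)) as [e|n]; simpl.
    + subst. rewrite mulg1. reflexivity.
    + reflexivity.
  - destruct H as (H1&H2&H3). rewrite <- mulA.
    destruct (dec (mul a' x = one)) as [e|n]; simpl.
    + rewrite e, mulg1. destruct w' as [|[u|v] w'']; simpl in *; try tauto.
    + reflexivity.
  - destruct (dec (a' = one)) as [e|n]; simpl.
    + subst. rewrite mulg1. reflexivity.
    + reflexivity.
Qed.
Lemma actB_comp b b' w : red w -> actB b (actB b' w) = actB (mul b b') w.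
Proof.
  destruct w as [|[x|y] w']; simpl; intros.
  - destruct (dec (b' = one)) as [e|n]; simpl.
    + subst. rewrite mulg1. reflexivity.
    + reflexivity.
  - destruct (dec (b' = one)) as [e|n]; simpl.
    + subst. rewrite mulg1. reflexivity.
    + reflexivity.
  - destruct H as (H1&H2&H3). rewrite <- mulA.
    destruct (dec (mul b' y = one)) as [e|n]; simpl.
    + rewrite e, mulg1. destruct w' as [|[u|v] w'']; simpl in *; try tauto.
    + reflexivity.
Qed.

Definition RW := {w : list Syl | red w}.
Lemma rw_eq (x y : RW) : proj1_sig x = proj1_sig y -> x = y.
Proof. destruct x, y; simpl; intros; subst; f_equal; apply proof_irrelevance. Qed.

Record perm := Perm { pf : RW -> RW; pi : RW -> RW;
  pK : forall x, pi (pf x) = x; piK : forall x, pf (pi x) = x }.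

Lemma perm_ext (p q : perm) : (forall x, pf p x = pf q x) -> p = q.
Proof.
  intros H. destruct p as [f fi fK fiK], q as [g gi gK giK]; simpl in *.
  assert (f = g) by (extensionality x; auto). subst g.
  assert (fi = gi).
  { extensionality y. transitivity (gi (f (fi y))); [rewrite gK; reflexivity|rewrite fiK; reflexivity]. }
  subst gi. f_equal; apply proof_irrelevance.
Qed.

Definition pmul (p q : perm) : perm.
Proof.
  refine (Perm (fun x => pf p (pf q x)) (fun x => pi q (pi p x)) _ _).
  - intros; rewrite !pK; reflexivity.
  - intros; rewrite !piK; reflexivity.
Defined.
Definition pinv (p : perm) : perm := Perm (pi p) (pf p) (piK p) (pK p).
Definition pone : perm := Perm (fun x => x) (fun x => x) (fun _ => eq_refl) (fun _ => eq_refl).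

Definition Kperm : group.
Proof.
  refine (@Group perm pmul pinv pone _ _ _ _ _); intros; apply perm_ext; intros; simpl;
    try reflexivity.
  - apply pK.
  - apply piK.
Defined.

Definition actA_rw (a : A) (x : RW) : RW := exist _ (actA a (proj1_sig x)) (red_actA a _ (proj2_sig x)).
Definition actB_rw (b : B) (x : RW) : RW := exist _ (actB b (proj1_sig x)) (red_actB b _ (proj2_sig x)).

Definition pA (a : A) : perm.
Proof.
  refine (Perm (actA_rw a) (actA_rw (inv a)) _ _); intros x; apply rw_eq; simpl;
    rewrite actA_comp by apply proj2_sig.
  - rewrite mulVg, actA_one by apply proj2_sig; reflexivity.
  - rewrite mulgV, actA_one by apply proj2_sig; reflexivity.
Defined.
Definition pB (b : B) : perm.
Proof.
  refine (Perm (actB_rw b) (actB_rw (inv b)) _ _); intros x; apply rw_eq; simpl;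
    rewrite actB_comp by apply proj2_sig.
  - rewrite mulVg, actB_one by apply proj2_sig; reflexivity.
  - rewrite mulgV, actB_one by apply proj2_sig; reflexivity.
Defined.

Lemma pA_hom : @is_hom A Kperm pA.
Proof. intros x y. apply perm_ext; intros w; apply rw_eq; simpl. symmetry; apply actA_comp, proj2_sig. Qed.
Lemma pB_hom : @is_hom B Kperm pB.
Proof. intros x y. apply perm_ext; intros w; apply rw_eq; simpl. symmetry; apply actB_comp, proj2_sig. Qed.

Definition h_sig := constructive_indefinite_description _ (proj1 (univ Kperm pA pB pA_hom pB_hom)).
Definition h : G -> Kperm := proj1_sig h_sig.
Lemma h_hom : is_hom h. Proof. exact (proj1 (proj2_sig h_sig)). Qed.
Lemma h_iA a : h (iA a) = pA a. Proof. exact (proj1 (proj2 (proj2_sig h_sig)) a). Qed.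
Lemma h_iB b : h (iB b) = pB b. Proof. exact (proj2 (proj2 (proj2_sig h_sig)) b). Qed.

Definition rw_nil : RW := exist red [] I.
Definition nf (g : G) : list Syl := proj1_sig (pf (h g) rw_nil).
Lemma red_nf g : red (nf g). Proof. unfold nf. exact (proj2_sig (pf (h g) rw_nil)). Qed.

Definition ev1 (s : Syl) : G := match s with inl a => iA a | inr b => iB b end.
Fixpoint eval (w : list Syl) : G := match w with [] => one | s :: w' => mul (ev1 s) (eval w') end.

Lemma iA_one : iA one = one. Proof. apply hom_one; auto. Qed.
Lemma iB_one : iB one = one. Proof. apply hom_one; auto. Qed.

Lemma ev_actA a w : eval (actA a w) = mul (iA a) (eval w).
Proof.
  destruct w as [|[x|y] w']; simpl.
  - destruct dec; simpl; [subst; rewrite iA_one, ?mul1g; reflexivity| reflexivity].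
  - rewrite mulA, <- homA. destruct dec as [e|n]; simpl.
    + rewrite e, iA_one, mul1g; reflexivity.
    + reflexivity.
  - destruct dec; simpl; [subst; rewrite iA_one, mul1g; reflexivity| reflexivity].
Qed.
Lemma ev_actB b w : eval (actB b w) = mul (iB b) (eval w).
Proof.
  destruct w as [|[x|y] w']; simpl.
  - destruct dec; simpl; [subst; rewrite iB_one, ?mul1g; reflexivity| reflexivity].
  - destruct dec; simpl; [subst; rewrite iB_one, mul1g; reflexivity| reflexivity].
  - rewrite mulA, <- homB. destruct dec as [e|n]; simpl.
    + rewrite e, iB_one, mul1g; reflexivity.
    + reflexivity.
Qed.

Definition Pr (g : G) : Prop := forall x : RW, eval (proj1_sig (pf (h g) x)) = mul g (eval (proj1_sig x)).

Lemma Pr_one : Pr one.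
Proof. intros x. rewrite (hom_one h h_hom). simpl. rewrite mul1g; reflexivity. Qed.
Lemma Pr_mul x y : Pr x -> Pr y -> Pr (mul x y).
Proof.
  intros Hx Hy w. rewrite h_hom. simpl. rewrite Hx, Hy, mulA; reflexivity.
Qed.
Lemma Pr_inv x : Pr x -> Pr (inv x).
Proof.
  intros Hx w. rewrite (hom_inv h x h_hom). simpl.
  pose proof (Hx (pi (h x) w)) as E. rewrite piK in E.
  rewrite E, mulKV; reflexivity.
Qed.
Lemma Pr_iA a : Pr (iA a).
Proof. intros w. rewrite h_iA. simpl. apply ev_actA. Qed.
Lemma Pr_iB b : Pr (iB b).
Proof. intros w. rewrite h_iB. simpl. apply ev_actB. Qed.

Definition SubT := {g : G | Pr g}.
Lemma sub_eq (x y : SubT) : proj1_sig x = proj1_sig y -> x = y.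
Proof. destruct x, y; simpl; intros; subst; f_equal; apply proof_irrelevance. Qed.
Definition smul (x y : SubT) : SubT := exist _ (mul (proj1_sig x) (proj1_sig y)) (Pr_mul _ _ (proj2_sig x) (proj2_sig y)).
Definition sinv_ (x : SubT) : SubT := exist _ (inv (proj1_sig x)) (Pr_inv _ (proj2_sig x)).
Definition sone : SubT := exist _ one Pr_one.
Definition Sub : group.
Proof.
  refine (@Group SubT smul sinv_ sone _ _ _ _ _); intros; apply sub_eq; simpl.
  - apply mulA.
  - apply mul1g.
  - apply mulg1.
  - apply mulVg.
  - apply mulgV.
Defined.
Definition sA (a : A) : Sub := exist _ (iA a) (Pr_iA a).
Definition sB (b : B) : Sub := exist _ (iB b) (Pr_iB b).
Lemma sA_hom : is_hom sA. Proof. intros x y; apply sub_eq; simpl; apply homA. Qed.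
Lemma sB_hom : is_hom sB. Proof. intros x y; apply sub_eq; simpl; apply homB. Qed.

Lemma Pr_all : forall g, Pr g.
Proof.
  destruct (proj1 (univ Sub sA sB sA_hom sB_hom)) as [h1 (H1&H2&H3)].
  assert (E : forall x, proj1_sig (h1 x) = x).
  { intros x. apply (proj2 (univ G iA iB homA homB) (fun x => proj1_sig (h1 x)) (fun x => x)).
    - intros u v. rewrite H1. reflexivity.
    - intros u v. reflexivity.
    - intros a. rewrite H2. reflexivity.
    - intros b. rewrite H3. reflexivity.
    - reflexivity.
    - reflexivity. }
  intros g. rewrite <- (E g). apply proj2_sig.
Qed.

Lemma eval_nf g : eval (nf g) = g.
Proof. unfold nf. rewrite Pr_all. simpl. apply mulg1. Qed.

Lemma nf_mul x y : nf (mul x y) = proj1_sig (pf (h x) (pf (h y) rw_nil)).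
Proof. unfold nf. rewrite h_hom. reflexivity. Qed.

Lemma nf_iA a x : nf (mul (iA a) x) = actA a (nf x).
Proof. rewrite nf_mul, h_iA. reflexivity. Qed.
Lemma nf_iB b x : nf (mul (iB b) x) = actB b (nf x).
Proof. rewrite nf_mul, h_iB. reflexivity. Qed.

Lemma nf_one : nf one = [].
Proof. unfold nf. rewrite (hom_one h h_hom). reflexivity. Qed.

Lemma nf_eval w : red w -> nf (eval w) = w.
Proof.
  induction w as [|[a|b] w IH]; simpl; intros.
  - apply nf_one.
  - destruct H as (H1&H2&H3). rewrite nf_iA, IH by auto.
    destruct w as [|[x|y] w']; simpl in *; try tauto; destruct dec; tauto.
  - destruct H as (H1&H2&H3). rewrite nf_iB, IH by auto.
    destruct w as [|[x|y] w']; simpl in *; try tauto; destruct dec; tauto.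
Qed.

Lemma nf_inj x y : nf x = nf y -> x = y.
Proof. intros E. rewrite <- (eval_nf x), <- (eval_nf y), E. reflexivity. Qed.



Lemma eval_app u v : eval (u ++ v) = mul (eval u) (eval v).
Proof. induction u; simpl. - rewrite mul1g; reflexivity. - rewrite IHu, mulA; reflexivity. Qed.

Lemma hd_ok_app s u v : u <> [] -> hd_ok s (u ++ v) = hd_ok s u.
Proof. destruct u; simpl; [congruence|reflexivity]. Qed.

Lemma red_app u v : red u -> red v -> (forall u' s, u = u' ++ [s] -> hd_ok s v) -> red (u ++ v).
Proof.
  induction u as [|s u IH]; simpl; intros Hu Hv J; auto.
  destruct Hu as (H1&H2&H3). split; [auto|split].
  - destruct u as [|t u0].
    + simpl. apply (J []). reflexivity.
    + rewrite hd_ok_app by discriminate. exact H2.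
  - apply IH; auto. intros u' s' E. apply (J (s :: u')). rewrite E; reflexivity.
Qed.

Lemma red_app_inv u v : red (u ++ v) -> red u /\ red v.
Proof.
  induction u as [|s u IH]; simpl; intros H; auto.
  destruct H as (H1&H2&H3). destruct (IH H3) as [R1 R2]. split; auto.
  split; [auto|split; auto]. destruct u; simpl in *; auto.
Qed.

Lemma red_mid u x y v : red (u ++ x :: y :: v) -> ~ sameF x y.
Proof.
  induction u as [|s u IH]; simpl; intros H.
  - destruct H as (_&H&_). exact H.
  - apply IH. tauto.
Qed.

Definition sinv (s : Syl) : Syl := match s with inl a => inl (inv a) | inr b => inr (inv b) end.
Definition winv (w : list Syl) : list Syl := rev (map sinv w).

Lemma ev1_sinv s : ev1 (sinv s) = inv (ev1 s).
Proof. destruct s; simpl; apply hom_inv; auto. Qed.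

Lemma eval_winv w : eval (winv w) = inv (eval w).
Proof.
  induction w as [|s w IH]; unfold winv in *; simpl.
  - rewrite inv_one; reflexivity.
  - rewrite eval_app, IH, inv_mul. simpl. rewrite mulg1, ev1_sinv. reflexivity.
Qed.

Lemma sameF_sinv_l s t : sameF (sinv s) t <-> sameF s t.
Proof. destruct s, t; simpl; tauto. Qed.
Lemma sameF_sym s t : sameF s t -> sameF t s.
Proof. destruct s, t; simpl; tauto. Qed.
Lemma nontriv_sinv s : nontriv s -> nontriv (sinv s).
Proof. destruct s; simpl; intros H E; apply H; apply inv_eq_one; auto. Qed.

Lemma red_winv w : red w -> red (winv w).
Proof.
  induction w as [|s w IH]; unfold winv in *; simpl; intros H; auto.
  destruct H as (H1&H2&H3). apply red_app; auto.
  - simpl. split; [apply nontriv_sinv; auto| auto].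
  - intros u' s' E. destruct w as [|t w0].
    + simpl in E. destruct u'; simpl in E; [discriminate|]. destruct u'; discriminate.
    + simpl in E. apply app_inj_tail in E. destruct E as [_ E]. subst s'. simpl.
      simpl in H2. intro F. apply H2. apply sameF_sym. rewrite <- sameF_sinv_l.
      rewrite sameF_sinv_l in F. apply sameF_sym in F. rewrite <- sameF_sinv_l in F.
      revert F. destruct s, t; simpl; tauto.
Qed.

Lemma nf_inv g : nf (inv g) = winv (nf g).
Proof.
  rewrite <- (eval_nf g) at 1. rewrite <- eval_winv. apply nf_eval, red_winv, red_nf.
Qed.

Lemma nf_mul_app x y : red (nf x ++ nf y) -> nf (mul x y) = nf x ++ nf y.
Proof.
  intros R. rewrite <- (eval_nf x) at 1. rewrite <- (eval_nf y) at 1.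
  rewrite <- eval_app. apply nf_eval; auto.
Qed.

Definition ZA (x : G) : Prop := exists a w, nf x = inl a :: w.

Lemma length_winv w : length (winv w) = length w.
Proof. unfold winv. rewrite length_rev, length_map. reflexivity. Qed.

Lemma exit_lemma z y : ZA z -> ~ ZA (mul z y) ->
  exists k, k <= length (nf y) /\ z = inv (eval (firstn k (nf y))).
Proof.
  intros [a [w Hz]] Hq.
  set (q := mul z y) in *.
  assert (Ey : y = mul (inv z) q) by (unfold q; rewrite mulKV; reflexivity).
  assert (Ny : nf y = winv (nf z) ++ nf q).
  { rewrite Ey. rewrite <- nf_inv. apply nf_mul_app. rewrite nf_inv.
    apply red_app; [apply red_winv, red_nf| apply red_nf|].
    intros u' s E. rewrite Hz in E. unfold winv in E. simpl in E.
    apply app_inj_tail in E. destruct E as [_ E]. subst s.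
    destruct (nf q) as [|[x|x] l] eqn:Eq; simpl; auto.
    exfalso. apply Hq. exists x, l. exact Eq. }
  exists (length (nf z)). split.
  - rewrite Ny, length_app, length_winv. lia.
  - rewrite Ny. rewrite <- (length_winv (nf z)). rewrite firstn_app, Nat.sub_diag, firstn_O, app_nil_r.
    rewrite firstn_all. rewrite eval_winv, inv_inv, eval_nf. reflexivity.
Qed.

Context (tfA : forall (a : A) n, a <> one -> expn a (S n) <> one)
        (tfB : forall (b : B) n, b <> one -> expn b (S n) <> one).

Definition smerge (s t : Syl) : Syl :=
  match s, t with
  | inl x, inl y => inl (mul x y)
  | inr x, inr y => inr (mul x y)
  | _, _ => s end.
Definition spow (s : Syl) (k : nat) : Syl :=
  match s with inl a => inl (expn a k) | inr b => inr (expn b k) end.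

Lemma sameF_dec s t : {sameF s t} + {~ sameF s t}.
Proof. destruct s, t; simpl; auto. Qed.
Lemma sameF_trans s t u : sameF s t -> sameF t u -> sameF s u.
Proof. destruct s, t, u; simpl; tauto. Qed.
Lemma ev1_triv s : ~ nontriv s -> ev1 s = one.
Proof.
  destruct s; simpl; intro H; apply NNPP in H; subst; [apply iA_one|apply iB_one].
Qed.
Lemma ev1_smerge s t : sameF s t -> ev1 (smerge s t) = mul (ev1 s) (ev1 t).
Proof. destruct s, t; simpl; try tauto; intros _; [apply homA|apply homB]. Qed.
Lemma sameF_smerge s t : sameF s t -> sameF (smerge s t) s.
Proof. destruct s, t; simpl; tauto. Qed.
Lemma ev1_spow s k : ev1 (spow s k) = expn (ev1 s) k.
Proof. destruct s; simpl; apply expn_hom; auto. Qed.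
Lemma sameF_spow s k : sameF (spow s k) s.
Proof. destruct s; simpl; auto. Qed.
Lemma nontriv_spow s k : nontriv s -> nontriv (spow s (S k)).
Proof. destruct s; simpl; [apply tfA|apply tfB]. Qed.
Lemma hd_ok_sameF s s' w : sameF s s' -> hd_ok s w -> hd_ok s' w.
Proof.
  destruct w as [|t w]; simpl; auto. intros E H F. apply H.
  eapply sameF_trans; eauto.
Qed.
Lemma hd_ok_sameF_r s t t' w : sameF t t' -> hd_ok s (t :: w) -> hd_ok s (t' :: w).
Proof.
  simpl. intros E H F. apply H. apply sameF_sym in E. eapply sameF_trans; eauto.
Qed.

Lemma red_replace_last w x y : red (w ++ [x]) -> sameF x y -> nontriv y -> red (w ++ [y]).
Proof.
  induction w as [|s w IH]; simpl; intros H E N.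
  - split; auto.
  - destruct H as (H1&H2&H3). split; [auto|split; [|apply IH; auto]].
    destruct w as [|t w0]; simpl in *.
    + intro F. apply H2. apply sameF_sym in E. eapply sameF_trans; eauto.
    + exact H2.
Qed.

Lemma red_single s : nontriv s -> red [s].
Proof. simpl; auto. Qed.

Lemma snoc_last (u u' : list Syl) s s' : s :: u ++ [s'] = u' ++ [s] -> True.
Proof. auto. Qed.

Lemma pow_CR c s1 u sm : nf c = s1 :: u ++ [sm] -> ~ sameF s1 sm ->
  forall n, exists mid, nf (expn c (S n)) = s1 :: mid ++ [sm].
Proof.
  intros Hc Hs n. induction n.
  - exists u. simpl. rewrite mulg1. exact Hc.
  - destruct IHn as [mid Hm]. exists (u ++ sm :: s1 :: mid).
    change (expn c (S (S n))) with (mul c (expn c (S n))).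
    rewrite nf_mul_app.
    + rewrite Hc, Hm. simpl. f_equal. rewrite <- !app_assoc. reflexivity.
    + pose proof (red_nf c) as R1. pose proof (red_nf (expn c (S n))) as R2.
      rewrite Hc, Hm in *. apply red_app; auto.
      intros u' s E. rewrite app_comm_cons in E. apply app_inj_tail in E.
      destruct E as [_ E]. subst s. simpl. intro F. apply Hs. apply sameF_sym; auto.
Qed.

Lemma conj_alg (y z a : G) : mul y (mul (mul z (mul a y)) (inv y)) = mul y (mul z a).
Proof. f_equal. rewrite <- !mulA, mulgV, mulg1. reflexivity. Qed.

Lemma pow_form n0 : forall c s1 u sm, length u <= n0 -> nf c = s1 :: u ++ [sm] ->
  forall n, exists mid, nf (expn c (S n)) = s1 :: mid ++ [sm].
Proof.
  induction n0 as [|n0 IH]; intros c s1 u sm Hl Hc n;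
  (destruct (sameF_dec s1 sm) as [Hs|Hs]; [|eapply pow_CR; eauto]);
  pose proof (red_nf c) as Rc; rewrite Hc in Rc.
  - destruct u; [|simpl in Hl; lia]. simpl in Rc. exfalso; tauto.
  - destruct u as [|t1 u']; [simpl in Rc; exfalso; tauto|].
    assert (Rc' := Rc). simpl in Rc'. destruct Rc' as (N1&O1&R1).
    assert (Ec : c = mul (ev1 s1) (mul (eval (t1 :: u')) (ev1 sm))).
    { rewrite <- (eval_nf c), Hc.
      change (s1 :: (t1 :: u') ++ [sm]) with ((s1 :: t1 :: u') ++ [sm]).
      rewrite eval_app. simpl. rewrite !mulg1, !mulA. reflexivity. }
    destruct (dec (nontriv (smerge sm s1))) as [Nm|Nm].
    +
      set (m := smerge sm s1) in *.
      assert (Sm : sameF sm m) by (apply sameF_sym, sameF_smerge, sameF_sym; auto).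
      assert (Rd : red (t1 :: u' ++ [m])).
      { rewrite app_comm_cons. destruct (red_app_inv [s1] ((t1::u') ++ [sm]) Rc) as [_ R].
        eapply red_replace_last; [exact R | exact Sm | exact Nm]. }
      assert (Nd : nf (eval (t1 :: u' ++ [m])) = t1 :: u' ++ [m]) by (apply nf_eval; auto).
      assert (Ht : ~ sameF t1 m).
      { intro F. apply O1. apply sameF_sym. eapply sameF_trans; [exact F|].
        apply sameF_sym. eapply sameF_trans; [exact Hs|exact Sm]. }
      destruct (pow_CR _ _ _ _ Nd Ht n) as [mid Hmid].
      exists (t1 :: mid).
      assert (Ed : eval (t1 :: u' ++ [m]) = mul (eval (t1 :: u')) (mul (ev1 sm) (ev1 s1))).
      { rewrite app_comm_cons, eval_app. simpl. rewrite mulg1. unfold m.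
        rewrite ev1_smerge; auto. apply sameF_sym; auto. }
      assert (Ec2 : c = mul (ev1 s1) (mul (eval (t1 :: u' ++ [m])) (inv (ev1 s1)))).
      { rewrite Ed, conj_alg. exact Ec. }
      rewrite Ec2, expn_conj.
      rewrite <- (eval_nf (expn _ (S n))), Hmid.
      assert (Rw : red (s1 :: (t1 :: mid) ++ [sm])).
      { pose proof (red_nf (expn (eval (t1 :: u' ++ [m])) (S n))) as R2. rewrite Hmid in R2.
        split; [auto|split].
        - simpl. exact O1.
        - rewrite app_comm_cons in R2. eapply red_replace_last; [exact R2| |].
          + apply sameF_sym; auto.
          + simpl in Rc. destruct (red_app_inv (s1 :: t1 :: u') [sm]) as [_ Rs].
            { simpl. exact Rc. } simpl in Rs; tauto. }
      rewrite <- (nf_eval _ Rw). f_equal. simpl. rewrite !eval_app. simpl.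
      rewrite !mulg1. unfold m. rewrite ev1_smerge by (apply sameF_sym; auto).
      rewrite (mulA (ev1 t1) (eval mid)), conj_alg, <- mulA. reflexivity.
    +
      assert (Einv : ev1 sm = inv (ev1 s1)).
      { apply mul_eq_one. rewrite <- ev1_smerge by (apply sameF_sym; auto). apply ev1_triv; auto. }
      rewrite Einv in Ec. rewrite Ec, expn_conj.
      destruct u' as [|x u''].
      * simpl in Rc. destruct Rc as (_&_&N2&O2&N3&_).
        exists [spow t1 (S n)].
        assert (Rw : red [s1; spow t1 (S n); sm]).
        { simpl. split; [auto|split; [|split; [apply nontriv_spow; auto|split; [|split; auto]]]].
          - intro F. apply O1. eapply sameF_trans; [exact F|apply sameF_spow].
          - intro F. apply O2. eapply sameF_trans; [|exact F]. apply sameF_sym, sameF_spow. }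
        change (s1 :: [spow t1 (S n)] ++ [sm]) with [s1; spow t1 (S n); sm].
        rewrite <- (nf_eval _ Rw). f_equal. simpl. rewrite ev1_spow, !mulg1, Einv. reflexivity.
      * destruct (exists_last (l := x :: u'')) as [u2 [tl Eu]]; [discriminate|].
        rewrite Eu in *.
        assert (Re : red (t1 :: u2 ++ [tl])).
        { destruct (red_app_inv [s1] ((t1 :: u2 ++ [tl]) ++ [sm])) as [_ R]; [exact Rc|].
          destruct (red_app_inv (t1 :: u2 ++ [tl]) [sm]) as [R' _]; auto. }
        assert (Hl2 : length u2 <= n0).
        { simpl in Hl. rewrite length_app in Hl. simpl in Hl. lia. }
        destruct (IH (eval (t1 :: u2 ++ [tl])) t1 u2 tl Hl2 (nf_eval _ Re) n) as [mid Hmid].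
        exists (t1 :: mid ++ [tl]).
        assert (Rw : red (s1 :: (t1 :: mid ++ [tl]) ++ [sm])).
        { pose proof (red_nf (expn (eval (t1 :: u2 ++ [tl])) (S n))) as R2. rewrite Hmid in R2.
          split; [auto|split; [exact O1|]].
          apply red_app; auto.
          - destruct (red_app_inv (s1 :: (t1 :: u2 ++ [tl])) [sm]) as [_ Rs]; [exact Rc|].
            exact Rs.
          - intros u' s E. rewrite app_comm_cons in E. apply app_inj_tail in E. destruct E as [_ E]. subst s. simpl.
            apply (red_mid (s1 :: t1 :: u2) tl sm []). simpl. simpl in Rc.
            rewrite <- app_assoc in Rc. exact Rc. }
        assert (EE : eval (t1 :: mid ++ [tl]) = expn (eval (t1 :: u2 ++ [tl])) (S n))
          by (rewrite <- Hmid; apply eval_nf).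
        rewrite <- (nf_eval _ Rw). f_equal.
        change (eval (s1 :: (t1 :: mid ++ [tl]) ++ [sm])) with
          (mul (ev1 s1) (eval ((t1 :: mid ++ [tl]) ++ [sm]))).
        rewrite eval_app, EE. simpl. rewrite Einv, mulg1. reflexivity.
Qed.

Context (a0 : A) (b0 : B) (Ha0 : a0 <> one) (Hb0 : b0 <> one).

Definition afst (s : Syl) : A := match s with inl x => x | inr _ => one end.

Lemma choose_alpha (a1 a2 : A) : exists al, al <> one /\ mul al a1 <> one /\ mul al a2 <> one.
Proof.
  set (e1 := a0). set (e2 := mul a0 a0). set (e3 := mul a0 (mul a0 a0)).
  assert (N2 : e2 <> one).
  { intro E. apply (tfA a0 1 Ha0). simpl. rewrite mulg1. exact E. }
  assert (N3 : e3 <> one).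
  { intro E. apply (tfA a0 2 Ha0). simpl. rewrite mulg1. exact E. }
  assert (D12 : e1 <> e2).
  { intro E. apply Ha0. apply (mul_cancel_l a0). rewrite mulg1. symmetry. exact E. }
  assert (D13 : e1 <> e3).
  { intro E. apply N2. apply (mul_cancel_l a0). rewrite mulg1. symmetry. exact E. }
  assert (D23 : e2 <> e3).
  { intro E. apply D12. apply (mul_cancel_l a0). exact E. }
  destruct (dec (mul e1 a1 = one \/ mul e1 a2 = one)) as [F1|F1];
    [|exists e1; split; [exact Ha0|tauto]].
  destruct (dec (mul e2 a1 = one \/ mul e2 a2 = one)) as [F2|F2];
    [|exists e2; split; [exact N2|tauto]].
  destruct (dec (mul e3 a1 = one \/ mul e3 a2 = one)) as [F3|F3];
    [|exists e3; split; [exact N3|tauto]].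
  exfalso.
  destruct F1 as [F1|F1]; apply mul_eq_one in F1;
  destruct F2 as [F2|F2]; apply mul_eq_one in F2;
  destruct F3 as [F3|F3]; apply mul_eq_one in F3;
  congruence.
Qed.

Lemma ZA_pref al x : al <> one ->
  (nf x = [] \/ exists s w, nf x = s :: w /\ mul al (afst s) <> one) -> ZA (mul (iA al) x).
Proof.
  intros Hal H. unfold ZA. rewrite nf_iA.
  destruct H as [E|(s&w&E&N)]; rewrite E; simpl.
  - destruct dec; [contradiction|]. eauto.
  - destruct s as [x'|y']; simpl in *.
    + destruct dec; [contradiction|]. eauto.
    + destruct dec; [contradiction|]. eauto.
Qed.

Lemma nf_iA_only x : nf (iA x) = [] \/ nf (iA x) = [inl x].
Proof.
  rewrite <- (mulg1 (iA x)), nf_iA, nf_one. simpl. destruct dec; auto.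
Qed.
Lemma nf_iB_only x : nf (iB x) = [] \/ nf (iB x) = [inr x].
Proof.
  rewrite <- (mulg1 (iB x)), nf_iB, nf_one. simpl. destruct dec; auto.
Qed.

Lemma ZA_B_start x : ZA x -> ~ ZA (mul (iB b0) x).
Proof.
  intros [a [w E]] [a' [w' E']]. rewrite nf_iB, E in E'. simpl in E'.
  destruct dec; [contradiction|discriminate].
Qed.

Lemma ZA_A_start al x : al <> one -> ~ ZA x -> ZA (mul (iA al) x).
Proof.
  intros Hal Hx. apply ZA_pref; auto.
  destruct (nf x) as [|[a|b] w] eqn:E; auto.
  - exfalso. apply Hx. exists a, w. exact E.
  - right. exists (inr b), w. split; auto. simpl. rewrite mulg1. exact Hal.
Qed.



Lemma imgA_ok x : ZA (mul (mul (iA a0) (iB b0)) (iA x)).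
Proof.
  rewrite <- mulA. unfold ZA. rewrite nf_iA, nf_iB.
  destruct (nf_iA_only x) as [E|E]; rewrite E; simpl;
  (destruct dec; [contradiction|]); simpl; (destruct dec; [contradiction|]); eauto.
Qed.

Lemma imgB_ok x : ZA (mul (iA a0) (iB x)).
Proof.
  unfold ZA. rewrite nf_iA.
  destruct (nf_iB_only x) as [E|E]; rewrite E; simpl;
  (destruct dec; [contradiction|]); eauto.
Qed.

Lemma winv_snoc s w t : winv (s :: w ++ [t]) = sinv t :: winv w ++ [sinv s].
Proof. unfold winv. simpl. rewrite map_app, rev_app_distr. simpl. reflexivity. Qed.

Lemma cyc_ok c : exists y, forall n, ZA (mul y (expn c n)) /\ ZA (mul y (inv (expn c n))).
Proof.
  destruct (nf c) as [|s1 rest] eqn:Hc.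
  - assert (c = one) by (rewrite <- (eval_nf c), Hc; reflexivity). subst c.
    exists (iA a0). intros n. rewrite expn_one, inv_one. split; apply ZA_pref; auto; left; apply nf_one.
  - destruct rest as [|r rest'].
    + destruct s1 as [a|b].
      * assert (c = iA a) by (rewrite <- (eval_nf c), Hc; simpl; apply mulg1). subst c.
        exists (mul (iA a0) (iB b0)). intros n.
        rewrite <- (expn_hom iA a n homA), <- (hom_inv iA _ homA).
        split; apply imgA_ok.
      * assert (c = iB b) by (rewrite <- (eval_nf c), Hc; simpl; apply mulg1). subst c.
        exists (iA a0). intros n.
        rewrite <- (expn_hom iB b n homB), <- (hom_inv iB _ homB).
        split; apply imgB_ok.
    + destruct (exists_last (l := r :: rest')) as [u [sm Eu]]; [discriminate|].
      rewrite Eu in Hc.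
      assert (Hic : nf (inv c) = sinv sm :: winv u ++ [sinv s1]) by (rewrite nf_inv, Hc; apply winv_snoc).
      destruct (choose_alpha (afst s1) (afst (sinv sm))) as [al (H1&H2&H3)].
      exists (iA al). intros n. destruct n as [|n].
      * simpl. rewrite inv_one. split; apply ZA_pref; auto; left; apply nf_one.
      * split; apply ZA_pref; auto; right.
        -- destruct (pow_form (length u) c s1 u sm (le_n _) Hc n) as [mid E].
           exists s1, (mid ++ [sm]). auto.
        -- rewrite <- expn_inv.
           destruct (pow_form (length (winv u)) (inv c) (sinv sm) (winv u) (sinv s1) (le_n _) Hic n)
             as [mid E].
           exists (sinv sm), (mid ++ [sinv s1]). auto.
Qed.

Lemma fam_ok H : free_prod_family iA iB H -> exists y, forall x, H x -> ZA (mul y x).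
Proof.
  intros [F|[F|[g F]]].
  - exists (mul (iA a0) (iB b0)). intros x Hx. apply F in Hx. destruct Hx as [t ->]. apply imgA_ok.
  - exists (iA a0). intros x Hx. apply F in Hx. destruct Hx as [t ->]. apply imgB_ok.
  - destruct (cyc_ok g) as [y Hy]. exists y. intros x Hx. apply F in Hx.
    destruct Hx as [n [->| ->]]; apply Hy.
Qed.

Lemma ZA_B_start' b x : b <> one -> ZA x -> ~ ZA (mul (iB b) x).
Proof.
  intros Hb [a [w E]] [a' [w' E']]. rewrite nf_iB, E in E'. simpl in E'.
  destruct dec; [contradiction|discriminate].
Qed.

Lemma iA_ne : iA a0 <> one.
Proof.
  intro E. pose proof (nf_iA a0 one) as N. rewrite mulg1, E, nf_one in N. simpl in N.
  destruct dec; [contradiction|discriminate].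
Qed.

Lemma last_default (l : list G) d1 d2 : l <> [] -> last l d1 = last l d2.
Proof.
  induction l as [|a l IH]; intros N; [congruence|]. destruct l; simpl; auto.
  apply IH. discriminate.
Qed.
Lemma last_cons (l : list G) x y : last (y :: l) x = last l y.
Proof. destruct l as [|c l]; [reflexivity|]. change (last (c :: l) x = last (c :: l) y). apply last_default. discriminate. Qed.

Context (P : G -> Prop) (coneP : positive_cone P) (X : list G) (r : nat).

Definition letters : list G := X ++ map inv X.
Fixpoint words (n : nat) : list (list G) :=
  match n with
  | 0 => [[]]
  | S n' => [] :: flat_map (fun a => map (cons a) (words n')) letters
  end.

Lemma words_in n : forall w, Forall (letter X) w -> length w <= n -> In w (words n).
Proof.
  induction n as [|n IH]; intros w F L.
  - destruct w; simpl in *; [auto|lia].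
  - destruct w as [|a w]; simpl; [auto|right].
    inversion F; subst. apply in_flat_map. exists a. split.
    + unfold letters. apply in_app_iff. destruct H1 as [I|[x [I E]]]; [left; auto|right].
      subst. apply in_map; auto.
    + apply in_map. apply IH; auto. simpl in L; lia.
Qed.

Definition Ylist : list G := map (@prodw G) (words r).
Definition Qlist : list G :=
  flat_map (fun y => map (fun k => inv (eval (firstn k (nf y)))) (seq 0 (S (length (nf y))))) Ylist.

Lemma Q_in z y : In y Ylist -> ZA z -> ~ ZA (mul z y) -> In z Qlist.
Proof.
  intros Iy Hz Hq. destruct (exit_lemma z y Hz Hq) as [k [Hk E]].
  apply in_flat_map. exists y. split; auto. rewrite E. apply (in_map (fun k => inv (eval (firstn k (nf y))))). apply in_seq. lia.
Qed.

Lemma upper (l : list G) (p0 : G) : P p0 -> exists t, forall q, In q l -> P (mul (inv q) t).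
Proof.
  intros Hp0. induction l as [|a l IH]; [exists one; simpl; tauto|].
  destruct IH as [t Ht].
  destruct (dec (mul (inv a) t = one)) as [E|E].
  - exists (mul t p0). intros q [<-|Hq]; rewrite mulA.
    + rewrite E, mul1g; auto.
    + apply (cone_mul coneP); auto.
  - destruct (cone_cases coneP _ E) as [Pp|Pn].
    + exists t. intros q [<-|Hq]; auto.
    + rewrite inv_mul, inv_inv in Pn. exists (mul a p0). intros q [<-|Hq].
      * rewrite mulKV; auto.
      * assert (Eq : mul (inv q) (mul a p0) = mul (mul (inv q) t) (mul (mul (inv t) a) p0)).
        { rewrite <- (mulA (inv t) a p0), <- (mulA (inv q) t), mulVK. reflexivity. }
        rewrite Eq. apply (cone_mul coneP); auto. apply (cone_mul coneP); auto.
Qed.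

Lemma cof_alg (t x c : G) : mul (inv t) (mul c x) = mul (mul (inv t) x) (mul (inv x) (mul c x)).
Proof. rewrite <- mulA, mulVK. reflexivity. Qed.

Lemma conj_ne (c x : G) : c <> one -> mul (inv x) (mul c x) <> one.
Proof.
  intros Hc E. apply Hc. apply (mul_cancel_r x). rewrite mul1g.
  apply (mul_cancel_l (inv x)). rewrite E, mulVg. reflexivity.
Qed.
Lemma conj_inv (c x : G) : inv (mul (inv x) (mul c x)) = mul (inv x) (mul (inv c) x).
Proof. rewrite !inv_mul, inv_inv, mulA. reflexivity. Qed.

Lemma cofA p0 t : P p0 -> exists z, ZA z /\ P (mul (inv t) z).
Proof.
  intros Hp0. set (x := mul t p0).
  assert (Px : P (mul (inv t) x)) by (unfold x; rewrite mulKV; auto).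
  destruct (dec (ZA x)) as [Zx|Zx]; [exists x; auto|].
  destruct (cone_cases coneP _ (conj_ne (iA a0) x iA_ne)) as [Pc|Pc].
  - exists (mul (iA a0) x). split; [apply ZA_A_start; auto|].
    rewrite cof_alg. apply (cone_mul coneP); auto.
  - rewrite conj_inv, <- (hom_inv iA _ homA) in Pc.
    exists (mul (iA (inv a0)) x). split.
    + apply ZA_A_start; auto. intro E. apply Ha0. apply inv_eq_one; auto.
    + rewrite cof_alg. apply (cone_mul coneP); auto.
Qed.

Lemma iB_ne : iB b0 <> one.
Proof.
  intro E. pose proof (nf_iB b0 one) as N. rewrite mulg1, E, nf_one in N. simpl in N.
  destruct dec; [contradiction|discriminate].
Qed.

Lemma cofB p0 t : P p0 -> exists z, ~ ZA z /\ P (mul (inv t) z).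
Proof.
  intros Hp0. set (x := mul t p0).
  assert (Px : P (mul (inv t) x)) by (unfold x; rewrite mulKV; auto).
  destruct (dec (ZA x)) as [Zx|Zx]; [|exists x; auto].
  destruct (cone_cases coneP _ (conj_ne (iB b0) x iB_ne)) as [Pc|Pc].
  - exists (mul (iB b0) x). split; [apply ZA_B_start'; auto|].
    rewrite cof_alg. apply (cone_mul coneP); auto.
  - rewrite conj_inv, <- (hom_inv iB _ homB) in Pc.
    exists (mul (iB (inv b0)) x). split.
    + apply ZA_B_start'; auto. intro E. apply Hb0. apply inv_eq_one; auto.
    + rewrite cof_alg. apply (cone_mul coneP); auto.
Qed.

Context (Hs : G -> Prop) (Hfam : free_prod_family iA iB Hs).

Lemma swamp_exists : exists S, negative_swamp X P Hs r S.
Proof.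
  assert (Ep : exists p0, P p0).
  { destruct (cone_cases coneP _ iA_ne); eauto. }
  destruct Ep as [p0 Hp0].
  destruct (upper Qlist p0 Hp0) as [t Ht].
  set (S := fun s => exists q, In q Qlist /\ s = mul (inv t) q).
  set (R := fun x => ZA (mul t x)).
  assert (Step : forall x x', R x -> ~ R x' -> dist_le X r x x' -> S x).
  { intros x x' Rx Rx' [w (Fw&Lw&Ew)]. exists (mul t x). split.
    - apply (Q_in _ (prodw w)); auto.
      + unfold Ylist. apply in_map. apply words_in; auto.
      + rewrite <- mulA, Ew. exact Rx'.
    - rewrite mulKV. reflexivity. }
  assert (Path : forall l x, R x -> ~ R (last l x) -> chain (dist_le X r) x l -> S x \/ Exists S l).
  { induction l as [|y l IH]; intros x Rx NR Ch.
    - simpl in NR. contradiction.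
    - simpl in Ch. destruct Ch as [D Ch]. rewrite last_cons in NR.
      destruct (dec (R y)) as [Ry|Ry].
      + right. destruct (IH y Ry NR Ch) as [Sy|Sl]; [apply Exists_cons_hd; auto|apply Exists_cons_tl; auto].
      + left. eapply Step; eauto. }
  exists S. split; [|split].
  - intros s [q [Iq ->]]. rewrite inv_mul, inv_inv. apply Ht; auto.
  - destruct (cofA p0 t Hp0) as [z [Zz Pz]]. destruct (cofB p0 t Hp0) as [z' [Zz' Pz']].
    exists (mul (inv t) z), (mul (inv t) z'). split; [auto|split; [auto|]].
    intros x l Hx Hl Ch. subst x. apply Path; auto.
    + unfold R. rewrite mulVK. exact Zz.
    + rewrite Hl. unfold R. rewrite mulVK. exact Zz'.
  - destruct (fam_ok Hs Hfam) as [y0 Hy0].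
    exists (mul (inv t) y0), (mul (inv t) (mul (iB b0) y0)).
    intros x l [h [Hh ->]] [h' [Hh' Hl]] Ch. apply Path; auto.
    + unfold R. rewrite <- mulA, mulVK. apply Hy0; auto.
    + rewrite Hl. unfold R. rewrite <- mulA, mulVK, <- mulA. apply ZA_B_start. apply Hy0; auto.
Qed.

End FP.

Lemma tf_of_order (Gr : group) (Q : Gr -> Prop) (cone : positive_cone Q) (a : Gr) n :
  a <> one -> expn a (S n) <> one.
Proof.
  intros Ha.
  assert (Pos : forall x, Q x -> forall k, Q (expn x (S k))).
  { intros x Qx k. induction k. - simpl. rewrite mulg1. auto.
    - change (expn x (S (S k))) with (mul x (expn x (S k))). apply (cone_mul cone); auto. }
  destruct (cone_cases cone _ Ha) as [Qa|Qa]; intro E.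
  - apply (cone_one cone). rewrite <- E. apply Pos; auto.
  - apply (cone_one cone). rewrite <- inv_one, <- E, <- expn_inv. apply Pos; auto.
Qed.

Theorem corollary5p10 (A B G : group) (iA : A -> G) (iB : B -> G) :
  finitely_generated A -> finitely_generated B ->
  left_orderable A -> left_orderable B ->
  nontrivial A -> nontrivial B ->
  is_free_product iA iB ->
  @Hucha G (free_prod_family iA iB).
Proof.
  intros _ _ [PA cA] [PB cB] [a0 Ha0] [b0 Hb0] [hA [hB U]].
  intros X _ P cP H HF r _.
  exact (swamp_exists A B G iA iB hA hB U
           (fun a n => tf_of_order A PA cA a n) (fun b n => tf_of_order B PB cB b n)
           a0 b0 Ha0 Hb0 P cP X r H HF).
Qed.
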